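(* Let $k\ge 1$ be an integer and let $\vec G=(V,\vec E)$ be a directed graph whose underlying undirected graph $G=(V,E)$ has an $f$-weighted $\beta$-orientation for every mapping $f:E\to\mathbb{Z}_{2k+1}\setminus\{0\}$ and every $\mathbb{Z}_{2k+1}$-boundary $\beta$. For every arc $\vec e\in\vec E$, let $L(\vec e)$ be a set of two distinct elements of $\mathbb{Z}_{2k+1}$. Then for every $\mathbb{Z}_{2k+1}$-boundary $\beta$, $\vec G$ has a $\mathbb{Z}_{2k+1}$-flow $g$ with boundary $\beta$ such that $g(\vec e)\in L(\vec e)$ for every $\vec e\in\vec E$.
   Context: Graphs are finite and may have multiple edges but no loops. A $\mathbb{Z}_m$-boundary is a map $\beta:V\to\mathbb{Z}_m$ with $\sum_{v\in V}\beta(v)\equiv0\pmod m$. For an orientation (or directed graph) $\vec G$ and $v\in V$, $\delta^+_{\vec G}(v)$ (resp. $\delta^-_{\vec G}(v)$) is the set of arcs leaving (resp. entering) $v$, and for a weight map $h$ on edges/arcs, $\partial h(v)=\sum_{\vec e\in\delta^+_{\vec G}(v)}h(e)-\sum_{\vec e\in\delta^-_{\vec G}(v)}h(e)$. Given $f:E\to\mathbb{Z}_m$, an orientation of $G$ is an $f$-weighted $\beta$-orientation if $\partial f(v)\equiv\beta(v)\pmod m$ for all $v$. A $\mathbb{Z}_m$-flow with boundary $\beta$ in $\vec G$ is a map $g:\vec E\to\mathbb{Z}_m$ with $\partial g(v)\equiv\beta(v)\pmod m$ for all $v$. *)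

(* Defs.v *)
From HB Require Import structures.
From mathcomp Require Import all_boot all_order all_algebra.
Set Implicit Arguments. Unset Strict Implicit. Unset Printing Implicit Defensive.
Import GRing.Theory.
Local Open Scope ring_scope.

(* A (multi)graph with vertex type V and edge type E: edge e joins
   [tl e] and [hd e]; as a directed graph, e is the arc tl e -> hd e.
   No loops: tl e != hd e. *)
Definition loopless (V E : finType) (tl hd : E -> V) := forall e, tl e != hd e.

Definition is_boundary (m : nat) (V : finType) (beta : V -> 'Z_m) :=
  \sum_(v : V) beta v = 0.

Definition bdry (m : nat) (V E : finType) (tl hd : E -> V) (h : E -> 'Z_m) (v : V)
  : 'Z_m := \sum_(e | tl e == v) h e - \sum_(e | hd e == v) h e.

(* An orientation of the underlying undirected graph: o e = true keeps
   e oriented tl e -> hd e, o e = false orients it hd e -> tl e. *)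
Definition otl (V E : finType) (tl hd : E -> V) (o : E -> bool) e :=
  if o e then tl e else hd e.
Definition ohd (V E : finType) (tl hd : E -> V) (o : E -> bool) e :=
  if o e then hd e else tl e.

Definition has_weighted_orientation (m : nat) (V E : finType) (tl hd : E -> V)
  (f : E -> 'Z_m) (beta : V -> 'Z_m) :=
  exists o : E -> bool, forall v, bdry (otl tl hd o) (ohd tl hd o) f v = beta v.

(* Main.v *)
Require Import Defs.
From HB Require Import structures.
From mathcomp Require Import all_boot all_order all_algebra.
From mathcomp Require Import ring.
Import GRing.Theory.
Local Open Scope ring_scope.

Section Aux.
Variables (m : nat) (V E : finType).
Local Notation R := 'Z_m.

Lemma bdryE (t h : E -> V) (F : E -> R) v :
  bdry t h F v = \sum_e ((if t e == v then F e else 0) - (if h e == v then F e else 0)).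
Proof. by rewrite /bdry sumrB -!big_mkcond. Qed.

Lemma eq_bdry (t h : E -> V) (F G : E -> R) v :
  (forall e, F e = G e) -> bdry t h F v = bdry t h G v.
Proof. by move=> FG; rewrite !bdryE; apply: eq_bigr => e _; rewrite FG. Qed.

Lemma bdry_lin (t h : E -> V) (c1 c2 : R) (F G : E -> R) v :
  bdry t h (fun e => c1 * F e + c2 * G e) v = c1 * bdry t h F v + c2 * bdry t h G v.
Proof.
rewrite !bdryE !mulr_sumr -big_split /=; apply: eq_bigr => e _.
by case: (t e == v); case: (h e == v); ring.
Qed.

Lemma bdry_sum (t h : E -> V) (F : E -> R) : \sum_v bdry t h F v = 0.
Proof.
rewrite /bdry sumrB.
have H : forall (s : E -> V), \sum_v \sum_(e | s e == v) F e = \sum_e F e.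
  move=> s; under eq_bigr do rewrite big_mkcond.
  rewrite exchange_big /=; apply: eq_bigr => e _.
  rewrite -big_mkcond /=.
  by under eq_bigl do rewrite eq_sym; rewrite big_pred1_eq.
by rewrite !H subrr.
Qed.

Lemma bdry_orient (t h : E -> V) (o : E -> bool) (F : E -> R) v :
  bdry (otl t h o) (ohd t h o) F v = bdry t h (fun e => if o e then F e else - F e) v.
Proof.
rewrite !bdryE; apply: eq_bigr => e _; rewrite /otl /ohd.
by case: (o e); case: (t e == v); case: (h e == v); ring.
Qed.
End Aux.
Arguments bdryE {m V E}. Arguments eq_bdry {m V E}. Arguments bdry_lin {m V E}. Arguments bdry_sum {m V E}. Arguments bdry_orient {m V E}.

Lemma key2 (R : comRingType) (G A B x : R) :
  2 * G - A - B = 2 * (x - A) - (1 * B + -1 * A) -> 2 * G = 2 * x.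
Proof.
move=> H; apply/eqP; rewrite -subr_eq0; apply/eqP.
have -> : 2 * G - 2 * x = (2 * G - A - B) - (2 * (x - A) - (1 * B + -1 * A)) by ring.
by rewrite H subrr.
Qed.

Theorem lemma9 (k : nat) (V E : finType) (tl hd : E -> V) :
  (1 <= k)%N ->
  loopless tl hd ->
  (forall (f : E -> 'Z_(k.*2.+1)) (beta : V -> 'Z_(k.*2.+1)),
      (forall e, f e != 0) -> is_boundary beta ->
      has_weighted_orientation tl hd f beta) ->
  forall (L : E -> {set 'Z_(k.*2.+1)}),
  (forall e, #|L e| = 2%N) ->
  forall beta : V -> 'Z_(k.*2.+1), is_boundary beta ->
  exists g : E -> 'Z_(k.*2.+1),
    (forall v, bdry tl hd g v = beta v) /\ (forall e, g e \in L e).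
Proof.
move=> k1 _ Hor L HL beta Hb.
pose a e := odflt 0 [pick x in L e].
pose b e := odflt 0 [pick x in L e :\ a e].
have aL e : a e \in L e.
  rewrite /a; case: pickP => [x //|H0].
  by move: (HL e); rewrite (eq_card0 H0).
have bL e : (b e \in L e) && (b e != a e).
  rewrite /b; case: pickP => [x|H0]; first by rewrite in_setD1 andbC.
  by move: (HL e); rewrite (cardsD1 (a e)) aL (eq_card0 H0).
pose f e := b e - a e.
have fnz e : f e != 0 by rewrite subr_eq0; case/andP: (bL e).
pose beta2 v := 2 * (beta v - bdry tl hd a v) - bdry tl hd f v.
have Hb2 : is_boundary beta2.
  rewrite /is_boundary /beta2 sumrB -mulr_sumr sumrB (bdry_sum tl hd a).
  by rewrite (bdry_sum tl hd f) Hb subrr mulr0 subrr.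
have [o Ho] := Hor f beta2 fnz Hb2.
exists (fun e => if o e then b e else a e); split; last first.
  by move=> e; case: (o e) => //; case/andP: (bL e).
move=> v.
have := Ho v; rewrite bdry_orient /beta2.
pose g := fun e => if o e then b e else a e.
have E1 : bdry tl hd (fun e => if o e then f e else - f e) v =
   2 * bdry tl hd g v - bdry tl hd a v - bdry tl hd b v.
  transitivity (bdry tl hd (fun e => 2 * g e + (-1) * (1 * a e + 1 * b e)) v).
    apply: eq_bdry => e; rewrite /g /f /=; case: (o e); ring.
  by rewrite bdry_lin (bdry_lin tl hd 1 1 a b); ring.
have E2 : bdry tl hd f v = bdry tl hd (fun e => 1 * b e + (-1) * a e) v.
  by apply: eq_bdry => e; rewrite /f; ring.
rewrite E1 E2 bdry_lin => H.
have H2 : 2 * bdry tl hd g v = 2 * beta v by apply: key2 H.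
have inv2 : (k.+1)%:R * 2 = 1 :> 'Z_(k.*2.+1).
  have n0 : (k.*2.+1)%:R = 0 :> 'Z_(k.*2.+1) by rewrite pchar_Zp // ltnS double_gt0.
  rewrite -natrM.
  have -> : (k.+1 * 2 = k.*2.+1 + 1)%N by rewrite muln2 doubleS addn1.
  by rewrite natrD n0 add0r.
rewrite -/g.
have -> : bdry tl hd g v = (k.+1)%:R * 2 * bdry tl hd g v by rewrite inv2 mul1r.
by rewrite -mulrA H2 mulrA inv2 mul1r.
Qed.
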